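(* Let a group $G$ act by combinatorial isometries without cube inversions on a $\mathrm{CAT}(0)$ cube complex $Z$, and let $\mathfrak{H}$ be a $G$-invariant family of hyperplanes of $Z$ which is strongly collapsible. Then $\mathfrak{H}$ is weakly collapsible.
   Context: In a $\mathrm{CAT}(0)$ cube complex, hyperplanes are equivalence classes of edges under the relation generated by ''being opposite edges of a square''; each hyperplane $H$ has two halfspaces (the components of the complement of its open carrier, the union of open cells whose closure contains an edge dual to $H$); the carrier of $H$ is the union of closed cubes containing an edge dual to $H$. For non-empty subsets $A,B$ (a hyperplane being replaced by its carrier), $\mathrm{Sep}(A\mid B)$ is the set of hyperplanes $H$ such that $A$ is contained in one halfspace of $H$ and $B$ in the other. A cube inversion is an isometry stabilizing some cube without fixing it pointwise. For a $G$-invariant family $\mathfrak{H}$ of hyperplanes: $\mathfrak{H}$ is weakly collapsible if for every vertex $z$ and every $g\in G\setminus\mathrm{Stab}(z)$, $\mathrm{Sep}(z\mid gz)\not\subseteq\mathfrak{H}$; $\mathfrak{H}$ is strongly collapsible if for every $H\in\mathfrak{H}$ and every $g\in G\setminus\mathrm{Stab}(H)$, $\mathrm{Sep}(H\mid gH)\not\subseteq\mathfrak{H}$. *)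

(* Defs.v *)
From mathcomp Require Import all_boot.
From Stdlib Require Import Relations.Relation_Operators.
Set Implicit Arguments. Unset Strict Implicit. Unset Printing Implicit Defensive.

(* A CAT(0) cube complex Z is encoded by its 1-skeleton, a median graph      *)
(* (Chepoi / Roller / Gerasimov: 1-skeleta of CAT(0) cube complexes are      *)
(* exactly the median graphs, and Z is recovered by filling in every         *)
Section CubeComplex.
Variable V : Type.
Variable adj : V -> V -> Prop.

Inductive nwalk : nat -> V -> V -> Prop :=
  | nwalk0 x : nwalk 0 x x
  | nwalkS n x y z : adj x y -> nwalk n y z -> nwalk n.+1 x z.

Definition gdist (x y : V) (n : nat) : Prop :=
  nwalk n x y /\ forall m, nwalk m x y -> n <= m.

Definition between (x z y : V) : Prop :=
  exists a b, gdist x z a /\ gdist z y b /\ gdist x y (a + b).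

Definition median_graph : Prop :=
  (forall x y, adj x y -> adj y x) /\
  (forall x, ~ adj x x) /\
  (forall x y, exists n, nwalk n x y) /\
  (forall x y z, exists m, (between x m y /\ between y m z /\ between x m z) /\
       forall m', between x m' y /\ between y m' z /\ between x m' z -> m' = m).

Definition is_edge (e : V * V) : Prop := adj e.1 e.2.

(* elementary relation generating hyperplanes: opposite edges of a square
   a - b - c - d - a, and reversal of orientation *)
Definition hyp_step (e f : V * V) : Prop :=
  (exists a b c d, e = (a, b) /\ f = (d, c) /\
     adj a b /\ adj b c /\ adj c d /\ adj d a /\ a <> c /\ b <> d) \/
  (is_edge e /\ f = (e.2, e.1)).

Definition hyp_equiv : V * V -> V * V -> Prop := clos_refl_sym_trans _ hyp_step.

(* A hyperplane is the class of an edge e.  A family of hyperplanes is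
   encoded by the set of all edges dual to its members, i.e. a set of edges
   saturated under hyp_equiv. *)
Definition hyp_family (F : V * V -> Prop) : Prop :=
  (forall e, F e -> is_edge e) /\
  (forall e f, F e -> hyp_equiv e f -> F f).

Definition carrier (e : V * V) (v : V) : Prop :=
  exists f, is_edge f /\ hyp_equiv e f /\ (v = f.1 \/ v = f.2).

(* u, v lie in the same halfspace of the hyperplane dual to e:
   connected in the complement of the (open) carrier *)
Definition sameside (e : V * V) : V -> V -> Prop :=
  clos_refl_sym_trans _ (fun x y => adj x y /\ ~ hyp_equiv e (x, y)).

Definition separates (e : V * V) (A B : V -> Prop) : Prop :=
  is_edge e /\
  (forall a a', A a -> A a' -> sameside e a a') /\
  (forall b b', B b -> B b' -> sameside e b b') /\
  (forall a b, A a -> B b -> ~ sameside e a b).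

Definition is_cube (C : V -> Prop) : Prop :=
  exists (n : nat) (f : {ffun 'I_n -> bool} -> V),
    injective f /\ (forall v, C v <-> exists u, f u = v) /\
    (forall u w, adj (f u) (f w) <-> #|[pred i | u i != w i]| = 1).

End CubeComplex.

Section Action.
Variables (V : Type) (adj : V -> V -> Prop).
Variables (G : Type) (mul : G -> G -> G) (one : G) (inv : G -> G).
Variable act : G -> V -> V.

Definition is_group : Prop :=
  (forall a b c, mul a (mul b c) = mul (mul a b) c) /\
  (forall a, mul one a = a) /\ (forall a, mul (inv a) a = one).

Definition isometric_action : Prop :=
  (forall x, act one x = x) /\
  (forall g h x, act (mul g h) x = act g (act h x)) /\
  (forall g x y, adj x y <-> adj (act g x) (act g y)).

Definition act_edge (g : G) (e : V * V) : V * V := (act g e.1, act g e.2).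

Definition no_cube_inversions : Prop :=
  forall g C, is_cube adj C -> (forall v, C v <-> C (act g v)) ->
    forall v, C v -> act g v = v.

Definition G_invariant (F : V * V -> Prop) : Prop :=
  forall g e, F e -> F (act_edge g e).

Definition weakly_collapsible (F : V * V -> Prop) : Prop :=
  forall (z : V) (g : G), act g z <> z ->
    ~ (forall e, separates adj e (fun v => v = z) (fun v => v = act g z) -> F e).

(* g \notin Stab(H) for H dual to e  <->  ~ hyp_equiv e (g e) *)
Definition strongly_collapsible (F : V * V -> Prop) : Prop :=
  forall (e : V * V) (g : G), F e -> ~ hyp_equiv adj e (act_edge g e) ->
    ~ (forall e', separates adj e' (carrier adj e) (carrier adj (act_edge g e)) -> F e').

End Action.

(* Main.v *)
Require Import Defs.
From mathcomp Require Import all_boot zify.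
From Stdlib Require Import Relations.Relation_Operators Classical ClassicalEpsilon.
Set Implicit Arguments. Unset Strict Implicit. Unset Printing Implicit Defensive.

Lemma min_ex (P : nat -> Prop) n0 : P n0 -> exists n, P n /\ forall m, P m -> n <= m.
Proof.
have: forall k n0, n0 <= k -> P n0 -> exists n, P n /\ forall m, P m -> n <= m.
  elim=> [|k IH] n1 Hn1 P1.
    exists n1; split=> // m _; lia.
  case: (classic (exists m, m < n1 /\ P m)) => [[m [Hm Pm]]|Hno].
    apply: (IH m) => //; lia.
  exists n1; split=> // m Pm; case: (leqP n1 m) => // Hlt.
  by exfalso; apply: Hno; exists m.
by move=> H; apply: (H n0 n0).
Qed.

Section MG.
Variable V : Type.
Variable adj : V -> V -> Prop.
Hypothesis Hmg : median_graph adj.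

Lemma adj_sym x y : adj x y -> adj y x. Proof. by case: Hmg => H _; apply: H. Qed.
Lemma adj_irr x : ~ adj x x. Proof. by case: Hmg => _ [H _]; apply: H. Qed.
Lemma adj_neq x y : adj x y -> x <> y. Proof. by move=> H E; subst; apply: (adj_irr H). Qed.

Lemma walk_cat n m x y z : nwalk adj n x y -> nwalk adj m y z -> nwalk adj (n + m) x z.
Proof. elim=> [//|k a b c Hab _ IH] H; rewrite addSn; apply: nwalkS Hab (IH H). Qed.

Lemma walk1 x y : adj x y -> nwalk adj 1 x y.
Proof. by move=> H; apply: nwalkS H (nwalk0 _ _). Qed.

Lemma walk_rev n x y : nwalk adj n x y -> nwalk adj n y x.
Proof.
elim=> [//|k a b c Hab _ IH]; first exact: nwalk0.
rewrite -addn1; apply: walk_cat IH (walk1 (adj_sym Hab)).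
Qed.

Lemma dist_ex x y : exists n, gdist adj x y n.
Proof.
case: Hmg => _ [_ [Hc _]]; case: (Hc x y) => n0 Hn0.
by case: (min_ex (P := fun n => nwalk adj n x y) Hn0) => n [H1 H2]; exists n.
Qed.

Definition d x y : nat := proj1_sig (constructive_indefinite_description _ (dist_ex x y)).

Lemma dP x y : gdist adj x y (d x y).
Proof. rewrite /d; by case: constructive_indefinite_description. Qed.

Lemma d_walk x y : nwalk adj (d x y) x y. Proof. by case: (dP x y). Qed.
Lemma d_le x y m : nwalk adj m x y -> d x y <= m. Proof. by case: (dP x y) => _; apply. Qed.
Lemma d_uniq x y n : gdist adj x y n -> d x y = n.
Proof. move=> [H1 H2]; apply/eqP; rewrite eqn_leq d_le //= H2 //; exact: d_walk. Qed.

Lemma dC x y : d x y = d y x.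
Proof. by apply/eqP; rewrite eqn_leq !d_le //; apply: walk_rev; exact: d_walk. Qed.

Lemma d_tri x y z : d x z <= d x y + d y z.
Proof. apply: d_le; apply: walk_cat; exact: d_walk. Qed.

Lemma d0 x y : d x y = 0 -> x = y.
Proof. move=> H; have := d_walk x y; rewrite H => W; by inversion W. Qed.

Lemma d_refl x : d x x = 0.
Proof. apply/eqP; rewrite -leqn0; apply: d_le; exact: nwalk0. Qed.

Lemma d_adj x y : adj x y -> d x y = 1.
Proof.
move=> H; have := d_le (walk1 H); case E: (d x y) => [|k]; last lia.
by move: (d0 E) => Exy; subst; case: (adj_irr H).
Qed.

Lemma d1_adj x y : d x y = 1 -> adj x y.
Proof.
move=> H; have := d_walk x y; rewrite H => W; inversion W; subst.
by inversion H2; subst.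
Qed.

Lemma d_step x y n : d x y = n.+1 -> exists x', adj x x' /\ d x' y = n.
Proof.
move=> H; have := d_walk x y; rewrite H => W; inversion W; subst.
exists y0; split=> //; apply/eqP; rewrite eqn_leq d_le //=.
have := d_tri x y0 y; rewrite H (d_adj H1); lia.
Qed.

Lemma d_adj_le v x y : adj x y -> d v x <= d v y + 1.
Proof. move=> H; have := d_tri v y x; rewrite (d_adj (adj_sym H)); lia. Qed.

Lemma betweenE x m y : between adj x m y <-> d x m + d m y = d x y.
Proof.
split.
  by case=> a [b [H1 [H2 H3]]]; rewrite (d_uniq H1) (d_uniq H2) (d_uniq H3).
move=> H; exists (d x m), (d m y); split; first exact: dP.
split; first exact: dP. rewrite H; exact: dP.
Qed.

Definition med3 x y z m := [/\ d x m + d m y = d x y, d y m + d m z = d y z & d x m + d m z = d x z].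

Lemma median_ex x y z : exists m, med3 x y z m /\ forall m', med3 x y z m' -> m' = m.
Proof.
case: Hmg => _ [_ [_ H]]; case: (H x y z) => m [[H1 [H2 H3]] U].
exists m; split; first by split; apply/betweenE.
move=> m' [K1 K2 K3]; apply: U; split; [|split]; by apply/betweenE.
Qed.

Lemma B v a b : adj a b -> d v a <> d v b.
Proof.
move=> Hab E; case: (median_ex v a b) => m [[H1 H2 H3] _].
rewrite (d_adj Hab) in H2.
have [Ha|Hb]: m = a \/ m = b.
  case E1: (d a m) => [|k]; first by left; apply/esym/d0.
  right; have: d m b = 0 by lia. by move/d0.
- subst m; move: H3 H1 H2; rewrite !d_refl (d_adj Hab) => H3 H1 H2; lia.
- subst m; move: H3 H1 H2; rewrite !d_refl (d_adj Hab) => H3 H1 H2.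
  move: H1; rewrite [d b a]dC (d_adj Hab) E => H1; lia.
Qed.

Lemma d_adj_le' v x y : adj x y -> d x v <= d y v + 1.
Proof. by move=> H; rewrite (dC x v) (dC y v); apply: d_adj_le. Qed.
Arguments d_adj_le' v [x y].
Arguments d_adj_le v [x y].
Arguments B v [a b].

Lemma two_common p x y : adj p x -> adj p y -> x <> y -> d x y = 2.
Proof.
move=> Hx Hy Hne; have := d_tri x p y; rewrite (d_adj Hy) (d_adj (adj_sym Hx)) => Hle.
case E: (d x y) => [|[|k]]; last lia.
- by case: Hne; apply: d0.
- have := B p (d1_adj E); by rewrite (d_adj Hx) (d_adj Hy).
Qed.

Lemma med_common p x y z : adj p x -> adj p y -> adj p z ->
  x <> y -> y <> z -> x <> z -> med3 x y z p.
Proof.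
move=> Hx Hy Hz Hxy Hyz Hxz; split.
- by rewrite (two_common Hx Hy Hxy) (dC x p) (d_adj Hx) (d_adj Hy).
- by rewrite (two_common Hy Hz Hyz) (dC y p) (d_adj Hy) (d_adj Hz).
- by rewrite (two_common Hx Hz Hxz) (dC x p) (d_adj Hx) (d_adj Hz).
Qed.

Lemma Quad u v w x k : d u v = k -> d u w = k -> v <> w -> adj x v -> adj x w ->
  d u x = k.+1 -> exists t, [/\ adj t v, adj t w & (d u t).+1 = k].
Proof.
move=> Hv Hw Hne Hxv Hxw Hx.
have D2 := two_common Hxv Hxw Hne.
case: (median_ex v w u) => m [[H1 H2 H3] _].
have Hmv : d v m <> 0.
  move=> E; move: (d0 E) => E'; subst m.
  move: H2; rewrite (dC w v) D2 (dC v u) Hv (dC w u) Hw; lia.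
have Hmw : d w m <> 0.
  move=> E; move: (d0 E) => E'; subst m.
  move: H3; rewrite D2 (dC w u) Hw (dC v u) Hv; lia.
have E1 : d v m = 1 by move: H1; rewrite D2 (dC m w); lia.
have E2 : d w m = 1 by move: H1; rewrite D2 (dC m w); lia.
exists m; split.
- by apply: adj_sym; apply: d1_adj.
- by apply: adj_sym; apply: d1_adj.
- move: H3; rewrite (dC v u) Hv E1 (dC m u); lia.
Qed.

Definition W (e : V * V) (v : V) : bool := d v e.1 < d v e.2.

Lemma Wrev a b v : adj a b -> W (b, a) v = ~~ W (a, b) v.
Proof. move=> H; rewrite /W /=; have := B v H; lia. Qed.

Lemma SQ a b c e v : adj a b -> adj b c -> adj c e -> adj e a -> a <> c -> b <> e ->
  W (a, b) v -> W (e, c) v.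
Proof.
rewrite /W /= => Hab Hbc Hce Hea Hac Hbe Hv.
have Hb1 := d_adj_le v Hab. have Hb2 := d_adj_le v (adj_sym Hab).
have He1 := d_adj_le v Hea. have He2 := d_adj_le v (adj_sym Hea).
have Hc1 := d_adj_le v Hbc. have Hc2 := d_adj_le v (adj_sym Hbc).
have Hce1 := d_adj_le v Hce. have Hce2 := d_adj_le v (adj_sym Hce).
have Bce := B v Hce.
case: (ltnP (d v e) (d v c)) => // Hle; exfalso.
have Ec : d v c = d v a by lia.
have Eb : d v b = (d v a).+1 by have := B v Hab; lia.
case: (Quad (u := v) (erefl (d v a)) Ec Hac (adj_sym Hab) Hbc Eb) => t [Hta Htc Ht].
case: (median_ex b e t) => m [_ U].
have Hbt : b <> t by move=> E; subst t; lia.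
have Het : e <> t by move=> E; subst t; lia.
have Ma : med3 b e t a by apply: med_common => //; [exact: adj_sym | exact: adj_sym].
have Mc : med3 b e t c.
  apply: med_common => //; [exact: adj_sym | exact: adj_sym].
by apply: Hac; rewrite (U _ Ma) (U _ Mc).
Qed.

Definition R (e f : V * V) := (forall v, W e v = W f v) \/ (forall v, W e v = ~~ W f v).

Lemma R_refl e : R e e. Proof. by left. Qed.
Lemma R_sym e f : R e f -> R f e.
Proof. case=> H; [left=> v; by rewrite H | right=> v; by rewrite H negbK]. Qed.
Lemma R_trans e f h : R e f -> R f h -> R e h.
Proof.
case=> H1 [] H2; [left|right|right|left] => v; rewrite H1 H2 ?negbK //.
Qed.

Lemma step_R e f : hyp_step adj e f -> R e f.
Proof.
case.
  move=> [a [b [c [e' [-> [-> [Hab [Hbc [Hce [Hea [Hac Hbe]]]]]]]]]]].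
  left=> v; apply/idP/idP; first exact: SQ.
  apply: SQ; try exact: adj_sym; by auto.
move=> [He ->]; right=> v; case: e He => a b /= He; by rewrite (Wrev _ He) negbK.
Qed.

Lemma equiv_R e f : hyp_equiv adj e f -> R e f.
Proof.
elim=> [x y /step_R //|x|x y _ /R_sym //|x y z _ H1 _ H2]; first exact: R_refl.
exact: R_trans H1 H2.
Qed.

Lemma CR a b : adj a b -> forall k x y, d x a = k -> adj x y -> W (a, b) x -> ~~ W (a, b) y ->
  hyp_equiv adj (a, b) (x, y).
Proof.
rewrite /W /= => Hab; elim=> [|k IH] x y Hk Hxy Hx Hy.
  move: (d0 Hk) => E; subst x.
  have := d_adj_le' a (adj_sym Hxy); have := d_adj_le' b Hxy; have := B y Hab.
  rewrite d_refl (d_adj Hab) => H1 H2 H3.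
  have E : d y b = 0 by lia.
  rewrite (d0 E); exact: rst_refl.
have Hxb : d x b = k.+2 by have := d_adj_le' b Hab; have := B x Hab; have := d_tri x a b; rewrite (d_adj Hab); lia.
have := d_adj_le' a Hxy; have := d_adj_le' b Hxy; have := d_adj_le' a (adj_sym Hxy);
  have := d_adj_le' b (adj_sym Hxy); have := B y Hab => ? ? ? ? ?.
have Hya : d y a = k.+2 by lia.
have Hyb : d y b = k.+1 by lia.
case: (d_step Hk) => x' [Hxx' Hx'a].
have Hx'b : d x' b = k.+1.
  have := d_tri x' a b; have := d_adj_le' b Hxx'; rewrite (d_adj Hab); lia.
have Hne : x' <> y by move=> E; subst x'; lia.
case: (Quad (u := b) (k := k.+1) _ _ Hne Hxx' Hxy _) => [|||t [Ht1 Ht2 Ht3]].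
- by rewrite dC.
- by rewrite dC.
- by rewrite dC.
have Hta : k.+1 <= d t a by have := d_adj_le' a (adj_sym Ht2); lia.
have Htb : d t b = k by rewrite dC; lia.
have IH' := IH x' t Hx'a (adj_sym Ht1) ltac:(lia) ltac:(lia).
apply: rst_trans IH' _; apply: rst_sym; apply: rst_step; left.
exists x, y, t, x'; do 2 split => //.
split=> //; split; first exact: adj_sym.
split=> //; split; first exact: adj_sym.
split; last by move=> E; subst; lia.
by move=> E; subst t; lia.
Qed.

Lemma CR_equiv e x y : is_edge adj e -> adj x y -> W e x != W e y -> hyp_equiv adj e (x, y).
Proof.
case: e => a b /= Hab Hxy; case Ex: (W (a, b) x); case Ey: (W (a, b) y) => //= _.
  by apply: (CR Hab (erefl _) Hxy) => //; rewrite Ey.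
have H := CR Hab (erefl _) (adj_sym Hxy) Ey ltac:(by rewrite Ex).
apply: rst_trans H _; apply: rst_step; right; split => //; exact: adj_sym.
Qed.

Lemma CR_R e x y : is_edge adj e -> adj x y -> W e x != W e y -> R e (x, y).
Proof. by move=> *; apply: equiv_R; apply: CR_equiv. Qed.

Lemma SS e u v : is_edge adj e -> sameside adj e u v -> W e u = W e v.
Proof.
move=> He; elim=> [x y [Hxy Hn]|x|x y _ ->|x y z _ -> _ ->] //.
case: (boolP (W e x == W e y)) => [/eqP //|Hd]; case: Hn; exact: CR_equiv.
Qed.

Lemma eq_by_W a b : (forall e, is_edge adj e -> W e a = W e b) -> a = b.
Proof.
move=> H; apply: NNPP => Hne.
case E: (d a b) => [|k]; first by apply: Hne; apply: d0.
case: (d_step E) => a' [Ha Ha'].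
have := H (a, a') Ha; rewrite /W /= d_refl (d_adj Ha) (dC b a) E (dC b a') Ha'; lia.
Qed.

Lemma Cvx e b : is_edge adj e -> W e b -> forall k a m, d a b <= k -> W e a ->
  d a m + d m b = d a b -> W e m.
Proof.
move=> He Hb; elim=> [|k IH] a m Hk Ha Hm.
  have E : d a m = 0 by lia. by rewrite -(d0 E).
case E: (d a m) => [|j]; first by rewrite -(d0 E).
case: (d_step E) => a' [Haa' Ha'm].
have T1 := d_tri a' m b. have T2 := d_adj_le' b Haa'.
have T3 := d_tri a m b.
case Wa': (W e a').
  by apply: (IH a') => //; lia.
have HR : R e (a, a') by apply: CR_R => //; rewrite Ha Wa'.
have : W e b = W (a, a') b.
  case: HR => H; first by rewrite H.
  by move: (H a); rewrite Ha /W /= d_refl (d_adj Haa').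
rewrite Hb /W /= (dC b a) (dC b a'); lia.
Qed.

Lemma cvx_eq e a b m : is_edge adj e -> W e a = W e b -> d a m + d m b = d a b -> W e m = W e a.
Proof.
case: e => x y /= He Hab Hm; case Ea: (W (x, y) a).
  by apply: (Cvx (b := b) He _ (leqnn (d a b))) => //; rewrite -Hab.
have Ha : W (y, x) a by rewrite Wrev // Ea.
have Hb : W (y, x) b by rewrite Wrev // -Hab Ea.
have := Cvx (e := (y, x)) (adj_sym He) Hb (leqnn (d a b)) Ha Hm.
by rewrite Wrev //; case: (W (x, y) m).
Qed.

Lemma R_same e f v : R e f -> W e v -> W f v -> forall u, W e u = W f u.
Proof. case=> H // Hv Hf; by move: (H v); rewrite Hv Hf. Qed.

Lemma R_eq e f a b : R e f -> W f a = W f b -> W e a = W e b.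
Proof. by case=> H E; rewrite !H E. Qed.

Lemma R_neq e f a b : R e f -> W f a != W f b -> W e a != W e b.
Proof. case=> H E; rewrite !H //; by case: (W f a) (W f b) E => [] []. Qed.

Lemma Adj1 a b L : (forall e, is_edge adj e -> W e a != W e b -> R e L) -> a <> b -> adj a b.
Proof.
move=> H Hne.
case E: (d a b) => [|k]; first by case: Hne; apply: d0.
case: (d_step E) => a' [Ha Ha'].
suff Eab : a' = b by rewrite -Eab.
apply: eq_by_W => e He; case: (boolP (W e a' == W e b)) => [/eqP //|Hd].
have Wfa : W (a, a') a by rewrite /W /= d_refl (d_adj Ha).
have Wfb : W (a, a') b = false by rewrite /W /= (dC b a) E (dC b a') Ha'; lia.
have HfL : R (a, a') L by apply: H => //; rewrite Wfa Wfb.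
have HeF : R e (a, a').
  case: (boolP (W e a == W e b)) => [/eqP Eq|Nq].
    apply: CR_R => //; by rewrite Eq eq_sym.
  exact: R_trans (H e He Nq) (R_sym HfL).
move/negP: Hd; case; apply/eqP; apply: (R_eq HeF).
by rewrite Wfb /W /= d_refl (d_adj (adj_sym Ha)).
Qed.

Section Geo.
Variables z w : V.

Definition nxt (v : V) : V :=
  match excluded_middle_informative (exists v', adj v v' /\ (d v' w).+1 = d v w) with
  | left h => proj1_sig (constructive_indefinite_description _ h)
  | right _ => v
  end.

Lemma nxt_spec v : 0 < d v w -> adj v (nxt v) /\ (d (nxt v) w).+1 = d v w.
Proof.
move=> H; rewrite /nxt; case: excluded_middle_informative => [h|h].
  by case: constructive_indefinite_description.
exfalso; apply: h; case E: (d v w) H => [|k] // _.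
by case: (d_step E) => x' [H1 H2]; exists x'; rewrite H2.
Qed.

Definition xs i := iter i nxt z.

Lemma xs_d i : i <= d z w -> d (xs i) w = d z w - i.
Proof.
elim: i => [|i IH] Hi; first by rewrite subn0.
rewrite /xs iterS -/(xs i).
have [_ H2] := nxt_spec (v := xs i) ltac:(rewrite IH; lia).
move: H2; rewrite IH; lia.
Qed.

Lemma xs_adj i : i < d z w -> adj (xs i) (xs i.+1).
Proof.
move=> Hi; rewrite /xs iterS -/(xs i).
by have [H1 _] := nxt_spec (v := xs i) ltac:(rewrite xs_d; lia).
Qed.

Lemma xs_walk k a : a + k <= d z w -> nwalk adj k (xs a) (xs (a + k)).
Proof.
elim: k a => [|k IH] a H; first by rewrite addn0; exact: nwalk0.
apply: nwalkS (xs_adj _) _; first lia.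
by rewrite -addSnnS; apply: IH; lia.
Qed.

Lemma xs_dist a b : a <= b -> b <= d z w -> d (xs a) (xs b) = b - a.
Proof.
move=> Hab Hb; apply/eqP; rewrite eqn_leq; apply/andP; split.
  by apply: d_le; have := xs_walk (k := b - a) (a := a); rewrite subnKC //; apply; lia.
have := d_tri (xs a) (xs b) w; rewrite !xs_d //; lia.
Qed.

Lemma xs0 : xs 0 = z. Proof. by []. Qed.

Lemma xsn : xs (d z w) = w.
Proof. by apply: d0; rewrite xs_d // subnn. Qed.

Definition E i := (xs i, xs i.+1).

Lemma E_edge i : i < d z w -> is_edge adj (E i).
Proof. exact: xs_adj. Qed.

Lemma WE j v : W (E j) v = (d v (xs j) < d v (xs j.+1)).
Proof. by []. Qed.

Lemma W_before j m : m <= j -> j < d z w -> W (E j) (xs m).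
Proof. move=> H1 H2; rewrite WE !xs_dist; lia. Qed.

Lemma W_after j m : j < m -> m <= d z w -> W (E j) (xs m) = false.
Proof. move=> H1 H2; rewrite WE (dC _ (xs j)) (dC _ (xs j.+1)) !xs_dist; lia. Qed.

Lemma Wz i : i < d z w -> W (E i) z.
Proof. by move=> H; rewrite -xs0; apply: W_before. Qed.

Lemma Ww i : i < d z w -> W (E i) w = false.
Proof. by move=> H; rewrite -{1}xsn; apply: W_after. Qed.

Lemma Edist i j : i < j -> j < d z w -> ~ R (E i) (E j).
Proof.
move=> Hij Hj HR.
have Hs := R_same HR (Wz (ltn_trans Hij Hj)) (Wz Hj).
have h1 := W_after (j := i) (m := i.+1) (ltnSn i) ltac:(lia).
have h2 := W_before (j := j) (m := i.+1) Hij Hj.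
by move: (Hs (xs i.+1)); rewrite h1 h2.
Qed.

Lemma Edist' i j : i <> j -> i < d z w -> j < d z w -> ~ R (E i) (E j).
Proof.
move=> Hne Hi Hj; case: (ltngtP i j) => H.
- exact: Edist.
- by move=> /R_sym; apply: Edist.
- by [].
Qed.

Lemma Esep e : is_edge adj e -> W e z != W e w -> exists i, i < d z w /\ R e (E i).
Proof.
move=> He Hs; apply: NNPP => Hno.
have Hall : forall i, i < d z w -> W e (xs i) = W e (xs i.+1).
  move=> i Hi; case: (boolP (W e (xs i) == W e (xs i.+1))) => [/eqP //|Hd].
  by exfalso; apply: Hno; exists i; split => //; apply: CR_R => //; apply: xs_adj.
have : forall i, i <= d z w -> W e (xs i) = W e z.
  elim=> [//|i IH] Hi; rewrite -Hall; [apply: IH|]; lia.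
move=> /(_ (d z w) (leqnn _)); rewrite xsn => Ew.
by move: Hs; rewrite Ew eqxx.
Qed.

End Geo.

Section Act.
Variables (G : Type) (mul : G -> G -> G) (one : G) (inv : G -> G) (act : G -> V -> V).
Hypothesis Hgrp : is_group mul one inv.
Hypothesis Hact : isometric_action adj mul one act.

Lemma act_inv_l g x : act (inv g) (act g x) = x.
Proof.
case: Hgrp => _ [_ Hinv]; case: Hact => H1 [H2 _].
by rewrite -H2 Hinv H1.
Qed.

Lemma act_inv_r g x : act g (act (inv g) x) = x.
Proof.
have inj : forall a b, act (inv g) a = act (inv g) b -> a = b.
  by move=> a b E; rewrite -(act_inv_l (inv g) a) E act_inv_l.
by apply: inj; rewrite act_inv_l.
Qed.

Lemma adj_act g x y : adj x y -> adj (act g x) (act g y).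
Proof. by case: Hact => _ [_ H] /H. Qed.

Lemma walk_act g n x y : nwalk adj n x y -> nwalk adj n (act g x) (act g y).
Proof.
elim=> [a|k a b c Hab _ IH]; first exact: nwalk0.
exact: nwalkS (adj_act g Hab) IH.
Qed.

Lemma d_act g x y : d (act g x) (act g y) = d x y.
Proof.
apply/eqP; rewrite eqn_leq; apply/andP; split.
  by apply: d_le; apply: walk_act; exact: d_walk.
by have := d_le (walk_act (inv g) (d_walk (act g x) (act g y))); rewrite !act_inv_l.
Qed.

Lemma W_act g e v : W (act_edge act g e) (act g v) = W e v.
Proof. by rewrite /W /act_edge /= !d_act. Qed.

Lemma R_act g e f : R e f -> R (act_edge act g e) (act_edge act g f).
Proof.
case=> H; [left|right] => v; rewrite -(act_inv_r g v) !W_act; exact: H.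
Qed.

Lemma R_act_inv g e f : R (act_edge act g e) (act_edge act g f) -> R e f.
Proof. by case=> H; [left|right] => v; have := H (act g v); rewrite !W_act. Qed.

Lemma act_edgeK g e : act_edge act g (act_edge act (inv g) e) = e.
Proof. by case: e => a b; rewrite /act_edge /= !act_inv_r. Qed.

Lemma edge_act g e : is_edge adj e -> is_edge adj (act_edge act g e).
Proof. exact: adj_act. Qed.

Section Main.
Variables (z : V) (g : G).
Let w := act g z.
Hypothesis Hne : w <> z.
Hypothesis HS : forall y, adj z y -> d y w < d z w -> R (z, y) (act_edge act g (z, y)).
Hypothesis NCI : no_cube_inversions adj act.

Definition FSC e := exists y, [/\ adj z y, d y w < d z w & R e (z, y)].

Lemma HS_compl y : adj z y -> d y w < d z w ->
  forall v, W (z, y) v = ~~ W (act_edge act g (z, y)) v.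
Proof.
move=> Hy Hd; case: (HS Hy Hd) => // H; exfalso.
move: (H w); rewrite -{2}/w W_act /W /= d_refl (d_adj Hy) (dC w z) (dC w y); lia.
Qed.

Lemma Wzy_z y : adj z y -> W (z, y) z.
Proof. by move=> Hy; rewrite /W /= d_refl (d_adj Hy). Qed.

Lemma Wzy_y y : adj z y -> W (z, y) y = false.
Proof. by move=> Hy; rewrite /W /= d_refl (d_adj (adj_sym Hy)). Qed.

Lemma StepA_inner j : j < d z w -> (forall i, i < j -> FSC (E z w i)) -> ~ FSC (E z w j) ->
  forall k, k <= j -> exists t, [/\ adj (xs z w (j - k)) t, R (E z w j) (xs z w (j - k), t)
                                  & ~~ W (E z w j) t].
Proof.
move=> Hj IH NL; elim=> [|k IHk] Hk.
  exists (xs z w j.+1); rewrite subn0; split.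
  - exact: xs_adj.
  - exact: R_refl.
  - by rewrite WE d_refl (d_adj (adj_sym (xs_adj Hj))).
set L := E z w j.
have [t [Hat HRt Wt]] := IHk (ltnW Hk).
set i := j - k.+1.
have Hi : j - k = i.+1 by rewrite /i; lia.
rewrite Hi in Hat HRt.
have Hin : i < d z w by rewrite /i; lia.
have [y [Hy Hyd HHy]] := IH i ltac:(rewrite /i; lia).
set H := E z w i.
set p := act g y.
have HeH : is_edge adj H by exact: E_edge.
have HeL : is_edge adj L by exact: E_edge.
have nRLH : ~ R L H.
  by move=> HR; apply: NL; exists y; split => //; apply: R_trans HR HHy.
have WHx : W H (xs z w i) by rewrite WE d_refl (d_adj (xs_adj Hin)).
have WHx1 : W H (xs z w i.+1) = false by rewrite WE d_refl (d_adj (adj_sym (xs_adj Hin))).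
have WHt : W H t = W H (xs z w i.+1).
  case: (boolP (W H (xs z w i.+1) == W H t)) => [/eqP //|Hd].
  have := CR_R HeH Hat Hd => HR.
  by exfalso; apply: nRLH; apply: R_trans HRt (R_sym HR).
have Hsame := R_same HHy (Wz Hin) (Wzy_z Hy).
have WHp : W H p.
  by rewrite Hsame (HS_compl Hy Hyd) /p W_act Wzy_y.
have Hwp : adj w p by apply: adj_act.
have WLw : W L w = false by apply: Ww.
have WLp : W L p = false.
  case: (boolP (W L w == W L p)) => [/eqP <- //|Hd].
  have := CR_R HeL Hwp Hd => HR.
  exfalso; apply: nRLH; apply: R_trans HR _.
  exact: R_trans (R_sym (HS Hy Hyd)) (R_sym HHy).
have WLx1 : W L (xs z w i.+1).
  have He1 : W (xs z w i.+1, t) (xs z w i.+1) != W (xs z w i.+1, t) t.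
    by rewrite /W /= d_refl (d_adj Hat) (dC t (xs z w i.+1)) (d_adj Hat) d_refl.
  have := R_neq HRt He1.
  by move: Wt; case: (W L t); case: (W L (xs z w i.+1)).
have WLx : W L (xs z w i).
  case: (boolP (W L (xs z w i) == W L (xs z w i.+1))) => [/eqP -> //|Hd].
  by exfalso; apply: nRLH; apply: CR_R => //; apply: xs_adj.
case: (median_ex (xs z w i) t p) => mm [[M1 M2 M3] _].
have WLmm : W L mm = false.
  by rewrite (cvx_eq HeL _ M2) ?WLp //; apply/negbTE.
have Hdiff : forall K, is_edge adj K -> W K (xs z w i) != W K mm -> R K L.
  move=> K HK Hd; apply: NNPP => nKL.
  have EKt : W K t = W K (xs z w i.+1).
    case: (boolP (W K (xs z w i.+1) == W K t)) => [/eqP //|Hd'].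
    by exfalso; apply: nKL; apply: R_trans (CR_R HK Hat Hd') (R_sym HRt).
  case: (classic (R K H)) => KH.
    have EKp : W K (xs z w i) = W K p by apply: (R_eq KH); rewrite WHx WHp.
    by move: Hd; rewrite (cvx_eq HK EKp M3) eqxx.
  have EKx : W K (xs z w i) = W K t.
    rewrite EKt; case: (boolP (W K (xs z w i) == W K (xs z w i.+1))) => [/eqP //|Hd'].
    by exfalso; apply: KH; apply: CR_R => //; apply: xs_adj.
  by move: Hd; rewrite (cvx_eq HK EKx M1) eqxx.
have Hne' : xs z w i <> mm by move=> E'; move: WLx; rewrite E' WLmm.
have Hadj : adj (xs z w i) mm by apply: (Adj1 Hdiff Hne').
exists mm; split => //.
  by apply: CR_R => //; rewrite WLx WLmm.
by rewrite WLmm.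
Qed.

Lemma StepA j : j < d z w -> FSC (E z w j).
Proof.
elim/ltn_ind: j => j IH Hj; apply: NNPP => NL.
have [t [Hat HRt Wt]] := StepA_inner Hj (fun i Hi => IH i Hi (ltn_trans Hi Hj)) NL (leqnn j).
rewrite subnn xs0 in Hat HRt.
apply: NL; exists t; split => //.
have Hs := R_same HRt (Wz Hj) (Wzy_z Hat).
have := Hs w; rewrite Ww // /W /= => /esym /negbT.
rewrite (dC t w) (dC z w); have := B w Hat; lia.
Qed.

Let n := d z w.

Definition yv (i : 'I_n) : V :=
  proj1_sig (constructive_indefinite_description _ (StepA (ltn_ord i))).

Lemma yv_spec (i : 'I_n) : [/\ adj z (yv i), d (yv i) w < d z w & R (E z w i) (z, yv i)].
Proof. rewrite /yv; by case: constructive_indefinite_description. Qed.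

Lemma yv_same (i : 'I_n) u : W (E z w i) u = W (z, yv i) u.
Proof. have [H1 _ H3] := yv_spec i; exact: (R_same H3 (Wz (ltn_ord i)) (Wzy_z H1)). Qed.

Definition sep e := W e z != W e w.

Lemma sep_R e i : i < n -> R e (E z w i) -> sep e.
Proof. move=> Hi HR; apply: (R_neq HR); by rewrite Wz // Ww. Qed.

Lemma y_agree (i : 'I_n) e : is_edge adj e -> ~ R e (E z w i) -> W e (yv i) = W e z.
Proof.
move=> He nR; have [H1 _ H3] := yv_spec i.
case: (boolP (W e z == W e (yv i))) => [/eqP //|Hd].
by exfalso; apply: nR; apply: R_trans (CR_R He H1 Hd) (R_sym H3).
Qed.

Definition spec (S : {ffun 'I_n -> bool}) v :=
  (forall e, is_edge adj e -> ~~ sep e -> W e v = W e z) /\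
  (forall i : 'I_n, W (E z w i) v = ~~ S i).

Lemma spec_aux (S : {ffun 'I_n -> bool}) m : exists v,
  (forall e, is_edge adj e -> ~~ sep e -> W e v = W e z) /\
  (forall i : 'I_n, W (E z w i) v = ~~ (S i && (i < m))).
Proof.
elim: m => [|m [v [Hv1 Hv2]]].
  exists z; split => // i; by rewrite andbF Wz.
case: (ltnP m n) => Hm; last first.
  exists v; split => // i; rewrite Hv2; have := ltn_ord i.
  by case: (S i) => //= Hi; rewrite !(leq_trans Hi) // ltnW.
set i0 := Ordinal Hm.
case Si0: (S i0); last first.
  exists v; split => // i; rewrite Hv2; case: (eqVneq (nat_of_ord i) m) => Him.
    have -> : i = i0 by apply: val_inj.
    by rewrite Si0.
  by rewrite [_ < m.+1]ltnS [i <= m]leq_eqVlt (negbTE Him).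
have [Hy1 Hy2 Hy3] := yv_spec i0.
case: (median_ex v (yv i0) w) => mm [[M1 M2 M3] _].
exists mm; split.
  move=> e He Hs; rewrite (cvx_eq He _ M1) ?Hv1 //.
  rewrite y_agree ?Hv1 //; move=> HR; move/negP: Hs; apply; exact: sep_R HR.
move=> i; case: (eqVneq (nat_of_ord i) m) => Him.
  have -> : i = i0 by apply: val_inj.
  have Wy : W (E z w i0) (yv i0) = false by rewrite yv_same Wzy_y.
  rewrite (cvx_eq (E_edge Hm) _ M2) ?Wy ?Ww //= Si0 /=; by rewrite ltnSn.
have Hi : i < n := ltn_ord i.
have Wy : W (E z w i) (yv i0) = W (E z w i) z.
  apply: y_agree; first exact: E_edge.
  apply: Edist'; try done; move=> E'; move: Him; by rewrite E' eqxx.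
rewrite [_ < m.+1]ltnS [i <= m]leq_eqVlt (negbTE Him) /= -Hv2.
case Wv: (W (E z w i) v).
  by rewrite (cvx_eq (E_edge Hi) _ M1) // Wv Wy Wz.
by rewrite (cvx_eq (E_edge Hi) _ M3) // Wv Ww.
Qed.

Lemma spec_ex S : exists v, spec S v.
Proof.
have [v [H1 H2]] := spec_aux S n.
exists v; split => // i; by rewrite H2 ltn_ord andbT.
Qed.

Lemma spec_uniq S a b : spec S a -> spec S b -> a = b.
Proof.
move=> [Ha1 Ha2] [Hb1 Hb2]; apply: eq_by_W => e He.
case: (boolP (sep e)) => Hs; last by rewrite Ha1 ?Hb1.
have [i [Hi HR]] := Esep He Hs.
apply: (R_eq HR); have := Ha2 (Ordinal Hi); have := Hb2 (Ordinal Hi); simpl.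
by move=> -> ->.
Qed.

Definition fc S : V := proj1_sig (constructive_indefinite_description _ (spec_ex S)).

Lemma fc_spec S : spec S (fc S).
Proof. rewrite /fc; by case: constructive_indefinite_description. Qed.

Definition Cset v := exists u, fc u = v.

Lemma CsetE v : Cset v <-> (forall e, is_edge adj e -> ~~ sep e -> W e v = W e z).
Proof.
split.
  by move=> [u <-]; case: (fc_spec u).
move=> H; exists [ffun i : 'I_n => ~~ W (E z w i) v].
apply: (spec_uniq (fc_spec _)); split => // i; by rewrite ffunE negbK.
Qed.

Lemma is_cube_C : is_cube adj Cset.
Proof.
exists n, fc; split.
  move=> u u' E'; apply/ffunP => i.
  have [_ H1] := fc_spec u; have [_ H2] := fc_spec u'.
  by move: (H1 i) (H2 i); rewrite E' => -> /negb_inj.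
split; first by move=> v.
move=> u u'.
have [Hu1 Hu2] := fc_spec u; have [Hu1' Hu2'] := fc_spec u'.
have Key : forall i, (u i != u' i) = (W (E z w i) (fc u) != W (E z w i) (fc u')).
  by move=> i; rewrite Hu2 Hu2'; case: (u i); case: (u' i).
split.
  move=> Hadj.
  have Hab : W (fc u, fc u') (fc u) != W (fc u, fc u') (fc u').
    by rewrite /W /= d_refl (d_adj Hadj) (dC (fc u') (fc u)) (d_adj Hadj) d_refl.
  have Hs : sep (fc u, fc u').
    case: (boolP (sep (fc u, fc u'))) => // Hs; move: Hab; by rewrite Hu1 // Hu1' // eqxx.
  have [i0 [Hi0 HR]] := Esep (e := (fc u, fc u')) Hadj Hs.
  apply: (eq_card1 (x := Ordinal Hi0)) => i; rewrite inE /= Key.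
  case: (eqVneq i (Ordinal Hi0)) => [->|Hne'].
    by rewrite inE eqxx (R_neq (R_sym HR) Hab).
  rewrite inE (negbTE Hne'); apply/negbTE/negP => Hd; have HR' := CR_R (E_edge (ltn_ord i)) Hadj Hd.
  apply: (Edist' (i := i) (j := i0)) => //.
  - by move=> E'; move/eqP: Hne'; apply; apply: val_inj => /=.
  - exact: R_trans HR' HR.
move=> Hc; have /card1P [i0 Hi0] : #|[pred i | u i != u' i]| == 1 by apply/eqP.
apply: (Adj1 (L := E z w i0)).
  move=> e He Hd.
  have Hs : sep e.
    case: (boolP (sep e)) => // Hs; move: Hd; by rewrite Hu1 // Hu1' // eqxx.
  have [i [Hi HR]] := Esep He Hs.
  have : (Ordinal Hi) \in [pred i | u i != u' i].
    rewrite inE /= Key; exact: (R_neq (R_sym HR) Hd).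
  by rewrite Hi0 inE => /eqP <-.
move=> E'.
have : i0 \in [pred i | u i != u' i] by rewrite Hi0 inE.
by rewrite inE /= Key E' eqxx.
Qed.

Lemma sep_act e : is_edge adj e -> sep e -> sep (act_edge act g e).
Proof.
move=> He Hs; have [i [Hi HR]] := Esep He Hs.
have [Hy1 Hy2 Hy3] := yv_spec (Ordinal Hi).
apply: (sep_R Hi); apply: R_trans (R_act g HR) _.
apply: R_trans (R_act g Hy3) _.
exact: R_trans (R_sym (HS Hy1 Hy2)) (R_sym Hy3).
Qed.

Lemma sep_act_inv e : is_edge adj e -> sep (act_edge act g e) -> sep e.
Proof.
move=> He Hs; have [i [Hi HR]] := Esep (edge_act g He) Hs.
have [Hy1 Hy2 Hy3] := yv_spec (Ordinal Hi).
apply: (sep_R Hi); apply: (R_act_inv (g := g)).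
exact: (R_trans HR (R_trans Hy3 (R_trans (HS Hy1 Hy2) (R_act g (R_sym Hy3))))).
Qed.

Lemma C_stable v : Cset v <-> Cset (act g v).
Proof.
rewrite !CsetE; split => H e He Hs.
  set e0 := act_edge act (inv g) e.
  have He0 : is_edge adj e0 by apply: edge_act.
  have Hs0 : ~~ sep e0.
    apply/negP => S0; move/negP: Hs; apply; have := sep_act He0 S0.
    by rewrite /e0 act_edgeK.
  rewrite -(act_edgeK g e) -/e0 W_act H // -(W_act g) -/w act_edgeK.
  by move/negPn: Hs; rewrite /sep => /eqP.
have Hs' : ~~ sep (act_edge act g e).
  by apply/negP => S'; move/negP: Hs; apply; apply: sep_act_inv.
rewrite -(W_act g) H //; last exact: edge_act.
move/negPn: Hs'; rewrite /sep => /eqP ->.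
by rewrite /w W_act.
Qed.

Lemma main_false : False.
Proof.
have Cz : Cset z.
  apply/CsetE => e _ _; done.
apply: Hne; exact: (NCI is_cube_C C_stable Cz).
Qed.

End Main.
End Act.

End MG.

Theorem lemma3p5 (V : Type) (adj : V -> V -> Prop)
  (G : Type) (mul : G -> G -> G) (one : G) (inv : G -> G) (act : G -> V -> V)
  (F : V * V -> Prop) :
  median_graph adj ->
  is_group mul one inv ->
  isometric_action adj mul one act ->
  no_cube_inversions adj act ->
  hyp_family adj F ->
  G_invariant act F ->
  strongly_collapsible adj act F ->
  weakly_collapsible adj act F.
Proof.
move=> Hmg Hgrp Hact NCI _ _ SC z g Hne Hall.
apply: (main_false Hgrp Hact Hne _ NCI) => y Hy Hyd.
have Hsep : separates adj (z, y) (fun v => v = z) (fun v => v = act g z).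
  split; first exact: Hy.
  split; first by move=> a a' -> ->; exact: rst_refl.
  split; first by move=> a a' -> ->; exact: rst_refl.
  move=> a b -> -> Hss; have := SS Hmg (e := (z, y)) Hy Hss.
  rewrite /W /= d_refl (d_adj Hmg Hy) (dC Hmg (act g z) z) (dC Hmg (act g z) y).
  lia.
have Fe := Hall _ Hsep.
apply: equiv_R; apply: NNPP => Hneq.
apply: (SC _ g Fe Hneq) => e' [He' [_ [_ Hsep']]].
apply: Hall; split => //.
split; first by move=> a a' -> ->; exact: rst_refl.
split; first by move=> a a' -> ->; exact: rst_refl.
move=> a b -> ->; apply: Hsep'.
- exists (z, y); split; first exact: Hy.
  by split; [exact: rst_refl | left].
- exists (act_edge act g (z, y)); split; first by rewrite /is_edge /act_edge /=; apply: (adj_act Hact).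
  by split; [exact: rst_refl | left].
Qed.
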